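(* The Hopf algebra $(dWHA,m,\mu)$ is selfdual with respect to the bilinear form $\langle\cdot,\cdot\rangle$ defined on substitutions by $\left\langle \binom{\rho}{\sigma},\binom{\rho'}{\sigma'}\right\rangle=1$ if after a renaming of letters one has $\rho=\sigma'$ and $\rho'=\sigma$, and $=0$ otherwise. That is, for all substitutions $p,p',p''$: $\langle m(p\otimes p'),p''\rangle=\langle p\otimes p',\mu(p'')\rangle$, where $\langle a\otimes b,c\otimes d\rangle=\langle a,c\rangle\langle b,d\rangle$.
   Context: Words are finite sequences of letters; $*$ denotes concatenation; the support $\mathrm{supp}(\alpha)$ of a word is the set of letters occurring in it. The shuffle product $\alpha\times_{sh}\beta$ of words $\alpha=[c_1,\dots,c_p]$, $\beta=[d_1,\dots,d_q]$ is the sum, with multiplicities, over all ways of choosing $p$ of the $p+q$ positions, of the word obtained by placing the $c$'s in their original order in the chosen positions and the $d$'s in their original order in the remaining ones. A subword of $[a_1,\dots,a_m]$ is a word $[a_{i_1},\dots,a_{i_r}]$ with $i_1<\dots<i_r$. Definition of $dWHA$: Let $\mathcal X$ be a countably infinite alphabet. A substitution is a pair $p=\binom{\rho}{\sigma}$ of words over $\mathcal X$ with $\mathrm{supp}(\rho)=\mathrm{supp}(\sigma)$, considered up to simultaneously renaming the letters of both words by a bijection of $\mathcal X$. $dWHA$ is the free abelian group with basis all substitutions (including the empty substitution $\binom{[\,]}{[\,]}$), graded by $\deg(p)=\#\mathrm{supp}(\rho)$. Multiplication: for substitutions $p=\binom{\rho}{\sigma}$, $p'=\binom{\rho'}{\sigma'}$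 written with $\mathrm{supp}(\rho)\cap\mathrm{supp}(\rho')=\emptyset$, $m(p\otimes p')=\binom{\rho*\rho'}{\sigma\times_{sh}\sigma'}$, meaning the sum of $\binom{\rho*\rho'}{\gamma}$ over the terms $\gamma$ (with multiplicity) of $\sigma\times_{sh}\sigma'$. The unit is the empty substitution. A good cut of a word $\sigma$ is a factorization $\sigma=\sigma_1*\sigma_2$ with $\mathrm{supp}(\sigma_1)\cap\mathrm{supp}(\sigma_2)=\emptyset$ (the two trivial cuts included). Comultiplication: $\mu(p)=\sum \binom{p^{-1}(\sigma_1)}{\sigma_1}\otimes\binom{p^{-1}(\sigma_2)}{\sigma_2}$, summed over all good cuts $\sigma=\sigma_1*\sigma_2$, where $p^{-1}(\sigma_i)$ is the subword of $\rho$ consisting of all occurrences in $\rho$ of letters of $\mathrm{supp}(\sigma_i)$. Counit: $\varepsilon$ is $1$ on the empty substitution and $0$ on all other substitutions. This is a Hopf algebra. *)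

(* Defs.v *)
From mathcomp Require Import all_boot.
From Stdlib Require Import ClassicalEpsilon.
Set Implicit Arguments. Unset Strict Implicit. Unset Printing Implicit Defensive.

Definition word := seq nat.

Definition is_subst (rho sigma : word) : Prop := rho =i sigma.

(* Shuffle product, as a list of words with multiplicities:
   sh [] t = [t], sh s [] = [s],
   sh (a::s) (b::t) = a.(sh s (b::t)) ++ b.(sh (a::s) t). *)
Fixpoint shuffle (s t : word) : seq word :=
  match s with
  | [::] => [:: t]
  | a :: s' =>
      let fix sh_t (t : word) : seq word :=
        match t with
        | [::] => [:: s]
        | b :: t' => map (cons a) (shuffle s' t) ++ map (cons b) (sh_t t')
        end in
      sh_t t
  end.

Definition same_subst (rho sigma rho' sigma' : word) : Prop :=
  exists f : nat -> nat, bijective f /\ map f rho = rho' /\ map f sigma = sigma'.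

(* The bilinear form on basis elements:
   <(rho,sigma),(rho',sigma')> = 1 iff, after renaming, rho = sigma' and
   rho' = sigma, i.e. (rho,sigma) ~ (sigma',rho'); 0 otherwise. *)
Definition pairing (rho sigma rho' sigma' : word) : nat :=
  if excluded_middle_informative (same_subst rho sigma sigma' rho') then 1 else 0.

(* <m(p (x) p'), p''> where p, p' have disjoint supports:
   sum over gamma in sigma shuffle sigma' of <(rho*rho', gamma), p''>. *)
Definition pair_mul (rho sigma rho' sigma' rho'' sigma'' : word) : nat :=
  \sum_(g <- shuffle sigma sigma') pairing (rho ++ rho') g rho'' sigma''.

Definition good_cut (sigma : word) (i : nat) : bool :=
  ~~ has (fun x => x \in take i sigma) (drop i sigma).

Definition preimage_word (rho sigma_i : word) : word :=
  filter (fun x => x \in sigma_i) rho.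

Definition pair_comul (rho sigma rho' sigma' rho'' sigma'' : word) : nat :=
  \sum_(i <- iota 0 (size sigma'').+1 | good_cut sigma'' i)
    pairing rho sigma (preimage_word rho'' (take i sigma'')) (take i sigma'')
    * pairing rho' sigma' (preimage_word rho'' (drop i sigma'')) (drop i sigma'').

(* Main.v *)
Require Import Defs.
From mathcomp Require Import all_boot.
From Stdlib Require Import ClassicalEpsilon Classical.
Set Implicit Arguments. Unset Strict Implicit. Unset Printing Implicit Defensive.

Lemma shuffle_nil_r (s : word) : shuffle s [::] = [:: s].
Proof. by case: s. Qed.

Lemma shuffle_cons a s b t : shuffle (a :: s) (b :: t) =
  map (cons a) (shuffle s (b :: t)) ++ map (cons b) (shuffle (a :: s) t).
Proof. by []. Qed.

Lemma filter_none (p q : pred nat) (t : word) :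
  all q t -> (forall x, q x -> ~~ p x) -> filter p t = [::].
Proof. elim: t => //= x t IH /andP[qx qt] h; rewrite (negbTE (h _ qx)); exact: IH. Qed.

Lemma shuffle_filter (p q : pred nat) s t g : g \in shuffle s t ->
  all p s -> all q t -> (forall x, p x -> ~~ q x) ->
  filter p g = s /\ filter q g = t.
Proof.
move=> + + + hpq; elim: s t g => [|a s IHs] t g.
  rewrite inE => /eqP -> _ qt; split; last by apply/all_filterP.
  apply: (filter_none qt) => x qx; apply/negP => px; by move: (hpq _ px); rewrite qx.
elim: t g => [|b t IHt] g.
  rewrite shuffle_nil_r inE => /eqP -> ps _; split; first by apply/all_filterP.
  exact: (filter_none ps).
rewrite shuffle_cons mem_cat => /orP[] /mapP [g' hg' ->].
  move=> /= /andP[pa ps] qt; rewrite pa (negbTE (hpq _ pa)).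
  by have [-> ->] := IHs _ _ hg' ps qt.
move=> ps /= /andP[qb qt].
have npb : ~~ p b by apply/negP => pb; move: (hpq _ pb); rewrite qb.
rewrite qb (negbTE npb).
by have [-> ->] := IHt _ hg' ps qt.
Qed.

Lemma shuffle_consl a s t w : w \in shuffle s t -> a :: w \in shuffle (a :: s) t.
Proof.
case: t => [|b t].
  by rewrite shuffle_nil_r !inE => /eqP ->.
by move=> h; rewrite shuffle_cons mem_cat map_f.
Qed.

Lemma shuffle_consr b s t w : w \in shuffle s t -> b :: w \in shuffle s (b :: t).
Proof.
case: s => [|a s].
  by rewrite !inE => /eqP ->.
by move=> h; rewrite shuffle_cons mem_cat orbC map_f.
Qed.

Lemma shuffle_split (p : pred nat) w : w \in shuffle (filter p w) (filter (predC p) w).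
Proof.
elim: w => [|a w IH] //=.
case: (p a) => /=; [exact: shuffle_consl | exact: shuffle_consr].
Qed.

Lemma shuffle_map f s t : shuffle (map f s) (map f t) = map (map f) (shuffle s t).
Proof.
elim: s t => [|a s IHs] t; first by [].
elim: t => [|b t IHt]; first by rewrite !shuffle_nil_r.
have E1 := IHs (b :: t).
rewrite [map f (a :: s)]/= [map f (b :: t)]/= shuffle_cons.
rewrite [map f (b :: t)]/= in E1.
rewrite [map f (a :: s)]/= in IHt.
by rewrite E1 IHt shuffle_cons map_cat -!map_comp.
Qed.

Lemma shuffle_uniq (p : pred nat) s t : all p s -> all (predC p) t -> uniq (shuffle s t).
Proof.
elim: s t => [|a s IHs] t; first by [].
elim: t => [|b t IHt]; first by rewrite shuffle_nil_r.
move=> hs ht; have /andP[pa ps] := hs; have /andP[pb pt] := ht.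
have u1 : uniq (shuffle s (b :: t)) by apply: IHs.
have u2 : uniq (shuffle (a :: s) t) by apply: IHt.
rewrite shuffle_cons cat_uniq !map_inj_uniq ?u1 ?u2 ?andbT; try by move=> x y [].
rewrite /=; apply/hasPn => g /mapP [g' _ ->].
apply/mapP => [][g'' _ [eab _]]; by move: pb; rewrite /= eab pa.
Qed.

Lemma shuffle_sub s t g : g \in shuffle s t -> {subset g <= s ++ t}.
Proof.
elim: s t g => [|a s IHs] t g.
  by rewrite inE => /eqP ->.
elim: t g => [|b t IHt] g.
  by rewrite shuffle_nil_r inE cats0 => /eqP ->.
rewrite shuffle_cons mem_cat => /orP[] /mapP [g' hg' ->] x; rewrite inE => /orP[/eqP ->|].
- by rewrite mem_cat inE eqxx.
- move/(IHs _ _ hg'); rewrite !mem_cat !inE.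
  by case: (x \in s); case: (x == a); case: (x == b); case: (x \in t).
- by rewrite mem_cat !inE eqxx !orbT.
- move/(IHt _ hg'); rewrite !mem_cat !inE.
  by case: (x \in s); case: (x == a); case: (x == b); case: (x \in t).
Qed.

Lemma tp_inv (z y : nat) : involutive (fun w => if w == z then y else if w == y then z else w).
Proof.
move=> w /=.
case: (eqVneq w z) => [->|wz]; case: (eqVneq y z) => [yz|yz].
all: try (case: (eqVneq w y) => [wy|wy]).
all: subst => //.
all: rewrite ?eqxx //.
all: repeat (match goal with H : is_true (?a != ?b) |- _ => rewrite (negbTE H) /= ?eqxx; try (rewrite eq_sym (negbTE H) /=) end).
all: by [].
Qed.

Lemma extend_bij (s : seq nat) (g0 : nat -> nat) : {in s &, injective g0} ->
  exists f, bijective f /\ {in s, f =1 g0}.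
Proof.
elim: s => [|x s IH] hinj.
  by exists id; split => //; exists id.
have [h [hb hs]] : exists h, bijective h /\ {in s, h =1 g0}.
  by apply: IH; apply: sub_in2 hinj => y ys; rewrite inE ys orbT.
case xs : (x \in s).
  exists h; split => // w; rewrite inE => /orP[/eqP ->|]; [exact: hs | exact: hs].
pose z := h x; pose y := g0 x.
pose tp w := if w == z then y else if w == y then z else w.
have tpK : involutive tp by exact: tp_inv.
exists (tp \o h); split; first exact: bij_comp (inv_bij tpK) hb.
move=> w; rewrite inE => /orP[/eqP ->|ws] /=; first by rewrite /tp eqxx.
rewrite hs // /tp.
have wx : w != x by apply/eqP => wx; move: ws; rewrite wx xs.
have -> : (g0 w == z) = false.
  apply/eqP => e; move: wx; rewrite -(hs _ ws) in e.
  by rewrite (bij_inj hb e) eqxx.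
have -> : (g0 w == y) = false.
  apply/eqP => e; move: wx; have := hinj w x; rewrite !inE eqxx ws orbT => /(_ isT isT e) ->.
  by rewrite eqxx.
by [].
Qed.

Lemma pairingP a b c d : (same_subst a b d c /\ pairing a b c d = 1) \/
  (~ same_subst a b d c /\ pairing a b c d = 0).
Proof. by rewrite /pairing; case: excluded_middle_informative => h; [left|right]. Qed.

Theorem theorem7p11 (rho sigma rho' sigma' rho'' sigma'' : seq nat) :
  is_subst rho sigma -> is_subst rho' sigma' -> is_subst rho'' sigma'' ->
  ~~ has (fun x => x \in rho) rho' ->
  pair_mul rho sigma rho' sigma' rho'' sigma'' =
  pair_comul rho sigma rho' sigma' rho'' sigma''.
Proof.
move=> hAB hA'B' hCD hdis.
have hd : {in rho', forall x, ~~ (x \in rho)} by apply/hasPn.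
have disj : forall x, x \in rho -> ~~ (x \in rho').
  by move=> x xA; apply/negP => xA'; move: (hd x xA'); rewrite xA.
have pB : all (fun x => x \in rho) sigma by apply/allP => x; rewrite hAB.
have pB' : all (fun x => x \in rho') sigma' by apply/allP => x; rewrite hA'B'.
have pB'' : all (predC (fun x => x \in rho)) sigma'.
  by apply/allP => x /(allP pB') xA'; exact: hd.
have Suniq : uniq (shuffle sigma sigma') := shuffle_uniq pB pB''.
have fwd : forall g f, g \in shuffle sigma sigma' -> bijective f ->
    map f (rho ++ rho') = sigma'' -> map f g = rho'' ->
   [/\ size rho <= size sigma'', good_cut sigma'' (size rho),
    same_subst rho sigma (take (size rho) sigma'')
      (preimage_word rho'' (take (size rho) sigma'')) &
    same_subst rho' sigma' (drop (size rho) sigma'')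
      (preimage_word rho'' (drop (size rho) sigma''))].
  move=> g f gS fb hD hC.
  have finj := bij_inj fb.
  have [fB fB'] := shuffle_filter gS pB pB' disj.
  rewrite map_cat in hD.
  have Ht : take (size rho) sigma'' = map f rho by rewrite -hD take_size_cat ?size_map.
  have Hd : drop (size rho) sigma'' = map f rho' by rewrite -hD drop_size_cat ?size_map.
  have E1 : preim f (fun x => x \in map f rho) =1 (fun x => x \in rho).
    by move=> x /=; rewrite mem_map.
  have E2 : preim f (fun x => x \in map f rho') =1 (fun x => x \in rho').
    by move=> x /=; rewrite mem_map.
  split.
  - by rewrite -hD size_cat size_map leq_addr.
  - rewrite /good_cut Ht Hd; apply/hasPn => y /mapP [x xA' ->]; rewrite mem_map //.
    exact: hd.
  - rewrite Ht /preimage_word -hC filter_map (eq_filter E1) fB.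
    by exists f.
  - rewrite Hd /preimage_word -hC filter_map (eq_filter E2) fB'.
    by exists f.
have bwd : forall i, good_cut sigma'' i ->
   same_subst rho sigma (take i sigma'') (preimage_word rho'' (take i sigma'')) ->
   same_subst rho' sigma' (drop i sigma'') (preimage_word rho'' (drop i sigma'')) ->
   exists g, g \in shuffle sigma sigma' /\ same_subst (rho ++ rho') g sigma'' rho''.
  move=> i gc [f1 [f1b [h1A h1B]]] [f2 [f2b [h2A h2B]]].
  move/hasPn: gc => gc.
  pose g0 x := if x \in rho then f1 x else f2 x.
  have g0inj : {in rho ++ rho' &, injective g0}.
    move=> x y; rewrite !mem_cat /g0.
    case xA: (x \in rho); case yA: (y \in rho) => /= hx hy.
    - exact: (@bij_inj _ _ _ f1b x y).
    - move=> e; have := gc (f2 y); rewrite -h2A (map_f f2 hy) -e -h1A (map_f f1 xA).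
      by move/(_ isT).
    - move=> e; have := gc (f2 x); rewrite -h2A (map_f f2 hx) e -h1A (map_f f1 yA).
      by move/(_ isT).
    - exact: (@bij_inj _ _ _ f2b x y).
  have [f [fb fg0]] := extend_bij g0inj.
  have fA : {in rho, f =1 f1}.
    by move=> x xA; rewrite fg0 ?mem_cat ?xA // /g0 xA.
  have fA' : {in rho', f =1 f2}.
    by move=> x xA'; rewrite fg0 ?mem_cat ?xA' ?orbT // /g0 (negbTE (hd x xA')).
  have fD : map f (rho ++ rho') = sigma''.
    by rewrite map_cat ((eq_in_map _ _ _).1 fA) ((eq_in_map _ _ _).1 fA') h1A h2A cat_take_drop.
  have fB : map f sigma = preimage_word rho'' (take i sigma'').
    rewrite -h1B; apply/eq_in_map => x xB; apply: fA; by rewrite hAB.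
  have fB' : map f sigma' = preimage_word rho'' (drop i sigma'').
    rewrite -h2B; apply/eq_in_map => x xB; apply: fA'; by rewrite hA'B'.
  have Cin : rho'' \in map (map f) (shuffle sigma sigma').
    rewrite -shuffle_map fB fB' /preimage_word.
    have E : filter (predC (fun x => x \in take i sigma'')) rho'' =
             filter (fun x => x \in drop i sigma'') rho''.
      apply: eq_in_filter => x xC /=.
      have : x \in sigma'' by rewrite -hCD.
      rewrite -{1}(cat_take_drop i sigma'') mem_cat.
      case xt: (x \in take i sigma'') => /=.
        by move=> _; apply/esym/negP => xd; move: (gc x xd); rewrite xt.
      by move=> ->.
    rewrite -E; exact: shuffle_split.
  have [g gS eC] := mapP Cin.
  by exists g; split => //; exists f; split => //; rewrite eC.
have uniqg : forall g1 g2, g1 \in shuffle sigma sigma' -> g2 \in shuffle sigma sigma' ->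
    same_subst (rho ++ rho') g1 sigma'' rho'' ->
    same_subst (rho ++ rho') g2 sigma'' rho'' -> g1 = g2.
  move=> g1 g2 g1S g2S [f1 [f1b [e1A e1g]]] [f2 [f2b [e2A e2g]]].
  have agree : {in rho ++ rho', f1 =1 f2} by apply/eq_in_map; rewrite e1A e2A.
  apply: (inj_map (bij_inj f1b)); rewrite e1g -e2g; apply/eq_in_map => x xg.
  apply: esym; apply: (agree x); have := shuffle_sub g2S xg.
  rewrite !mem_cat => /orP[xB|xB']; [by rewrite hAB xB | by rewrite hA'B' xB' orbT].
rewrite /pair_mul /pair_comul.
case: (classic (exists g, g \in shuffle sigma sigma' /\
                  same_subst (rho ++ rho') g sigma'' rho'')) => [[g0 [g0S hg0]]|nex].
- have [f [fb [e1 e2]]] := hg0.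
  have [kle gck s1 s2] := fwd _ _ g0S fb e1 e2.
  rewrite (bigD1_seq g0) //=.
  have -> : pairing (rho ++ rho') g0 rho'' sigma'' = 1.
    by case: (pairingP (rho ++ rho') g0 rho'' sigma'') => [[_ ->]|[nh _]].
  rewrite big1_seq; last first.
    move=> g /andP[ng gS]; case: (pairingP (rho ++ rho') g rho'' sigma'') => [[h _]|[_ ->]] //.
    by move: ng; rewrite (uniqg _ _ gS g0S h hg0) eqxx.
  have kin : size rho \in iota 0 (size sigma'').+1 by rewrite mem_iota add0n ltnS.
  rewrite big_mkcond (bigD1_seq (size rho) kin (iota_uniq 0 _)) /=.
  rewrite gck.
  have -> : pairing rho sigma (preimage_word rho'' (take (size rho) sigma''))
       (take (size rho) sigma'') = 1.
    by case: (pairingP rho sigma (preimage_word rho'' (take (size rho) sigma'')) (take (size rho) sigma'')) => [[_ ->]|[nh _]].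
  have -> : pairing rho' sigma' (preimage_word rho'' (drop (size rho) sigma''))
       (drop (size rho) sigma'') = 1.
    by case: (pairingP rho' sigma' (preimage_word rho'' (drop (size rho) sigma'')) (drop (size rho) sigma'')) => [[_ ->]|[nh _]].
  rewrite big1_seq //.
  move=> i /andP[ik iin]; case gci: (good_cut sigma'' i) => //.
  case: (pairingP rho sigma (preimage_word rho'' (take i sigma'')) (take i sigma''))
    => [[[f1 [_ [h1 _]]] _]|[_ ->]] //.
  have ile : i <= size sigma''.
    by move: iin; rewrite inE mem_iota; case/orP => [/eqP ->|/andP[_]]; rewrite ?add1n ?ltnS.
  have := congr1 size h1; rewrite size_map size_takel // => ki.
  by move: ik; rewrite -ki eqxx.
- rewrite big1_seq; last first.
    move=> g /andP[_ gS]; case: (pairingP (rho ++ rho') g rho'' sigma'') => [[h _]|[_ ->]] //.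
    by case: nex; exists g.
  rewrite big1_seq //.
  move=> i /andP[gci iin].
  case: (pairingP rho sigma (preimage_word rho'' (take i sigma'')) (take i sigma''))
    => [[h1 ->]|[_ ->]] //.
  case: (pairingP rho' sigma' (preimage_word rho'' (drop i sigma'')) (drop i sigma''))
    => [[h2 ->]|[_ ->]] //.
  by case: nex; exact: bwd gci h1 h2.
Qed.
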